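(* Let $\mathcal{S}=(\sigma_{ij})\in\mathrm{SL}(2,\mathbb{Z})$ with $\mathrm{tr}(\mathcal{S})>2$, $\lambda>1$ its larger eigenvalue, and $P=(p_{ij})$ a real matrix with $\det P=1$ and $P\mathcal{S}P^{-1}=\mathrm{diag}(1/\lambda,\lambda)$. For real $c_1,c_2,c_3$ put $$\mathbf{t}_1=\begin{pmatrix}1&p_{11}&c_1\\0&1&p_{21}\\0&0&1\end{pmatrix},\ \mathbf{t}_2=\begin{pmatrix}1&p_{12}&c_2\\0&1&p_{22}\\0&0&1\end{pmatrix},\ \mathbf{t}_3=\begin{pmatrix}1&0&c_3\\0&\lambda&0\\0&0&1\end{pmatrix},\ \mathbf{t}_4^{s}=\begin{pmatrix}1&0&s\\0&1&0\\0&0&1\end{pmatrix}\ (s\in\mathbb{R}).$$ Then for any integers $q\ne0$, $m_1,m_2$ (and any $c_3$) there exist unique real $c_1,c_2$ for which these elements of $\mathrm{Sol}_1^4$ generate a group $\tilde\Gamma_{(\mathcal{S};q,m_1,m_2)}$ with the presentation $$\langle \mathbf{t}_1,\mathbf{t}_2,\mathbf{t}_3,\mathbf{t}_4^{1/q}\mid [\mathbf{t}_1,\mathbf{t}_2]=\mathbf{t}_4,\ \mathbf{t}_4\text{ central},\ \mathbf{t}_3\mathbf{t}_1\mathbf{t}_3^{-1}=\mathbf{t}_1^{\sigma_{11}}\mathbf{t}_2^{\sigma_{21}}\mathbf{t}_4^{m_1/q},\ \mathbf{t}_3\mathbf{t}_2\mathbf{t}_3^{-1}=\mathbf{t}_1^{\sigma_{12}}\mathbf{t}_2^{\sigma_{22}}\mathbf{t}_4^{m_2/q}\rangle;$$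 that is, unique $c_1,c_2$ for which the last two relations hold.
   Context: $\mathrm{Sol}_1^4$ is the group of real matrices $\begin{pmatrix}1&x&z\\0&e^u&y\\0&0&1\end{pmatrix}$. *)

(* Defs.v *)
From mathcomp Require Import all_boot all_order all_algebra.
From mathcomp Require Import reals.
Set Implicit Arguments. Unset Strict Implicit. Unset Printing Implicit Defensive.
Import Order.TTheory GRing.Theory Num.Theory.
Local Open Scope ring_scope.

Definition mx3 {R : ringType} (a b c d e f g h k : R) : 'M[R]_3 :=
  \matrix_(i < 3, j < 3)
    nth 0 (nth [::] [:: [:: a; b; c]; [:: d; e; f]; [:: g; h; k]] i) j.

Definition diag2 {R : ringType} (a b : R) : 'M[R]_2 :=
  \matrix_(i < 2, j < 2) (if i == j then (if val i == 0%N then a else b) else 0).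

Definition tt1 {R : realType} (P : 'M[R]_2) (c1 : R) : 'M[R]_3 :=
  mx3 1 (P 0 0) c1  0 1 (P 1 0)  0 0 1.
Definition tt2 {R : realType} (P : 'M[R]_2) (c2 : R) : 'M[R]_3 :=
  mx3 1 (P 0 1) c2  0 1 (P 1 1)  0 0 1.
Definition tt3 {R : realType} (lam c3 : R) : 'M[R]_3 :=
  mx3 1 0 c3  0 lam 0  0 0 1.
Definition tt4 {R : realType} (s : R) : 'M[R]_3 :=
  mx3 1 0 s  0 1 0  0 0 1.

(* Main.v *)
Require Import Defs.
From mathcomp Require Import all_boot all_order all_algebra.
From mathcomp Require Import reals ring lra.
Import Order.TTheory GRing.Theory Num.Theory.
Local Open Scope ring_scope.

Section H.
Variable R : realType.
Definition heis (a b c : R) : 'M[R]_3 := mx3 1 a c 0 1 b 0 0 1.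

Ltac ent := apply/matrixP; case => [[|[|[|?]]] ?] //;
  case => [[|[|[|?]]] ?] //; rewrite /tt3 /heis !(mxE, big_ord_recr, big_ord0) /=.

Lemma heis_mul a b c a' b' c' :
  heis a b c *m heis a' b' c' = heis (a+a') (b+b') (c+c'+a*b').
Proof. by ent; ring. Qed.

Lemma heis1 : heis 0 0 0 = 1.
Proof. by ent. Qed.
Lemma heis_unit a b c : heis a b c \is a GRing.unit.
Proof.
have H : heis a b c *m heis (-a) (-b) (-c + a*b) = 1%:M.
  rewrite heis_mul (_ : 1%:M = heis 0 0 0); last by rewrite heis1.
  congr heis; ring.
by case: (mulmx1_unit H).
Qed.

Lemma heis_inv a b c : (heis a b c)^-1 = heis (-a) (-b) (-c + a*b).
Proof.
have H : heis a b c * heis (-a) (-b) (-c + a*b) = 1.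
  rewrite -mulmxE heis_mul -heis1; congr heis; ring.
have := mulKr (heis_unit a b c) (heis (-a) (-b) (-c + a*b)).
by rewrite H mulr1.
Qed.

Lemma heis_exprn a b c (n : nat) : heis a b c ^+ n =
  heis (n%:R * a) (n%:R * b) (n%:R * c + n%:R * (n%:R - 1) / 2 * (a * b)).
Proof.
elim: n => [|n IH]; first by rewrite expr0 -heis1; congr heis; ring.
rewrite exprSr IH -mulmxE heis_mul; congr heis; rewrite -natr1; try ring.
by field.
Qed.

Lemma heis_exprz a b c (n : int) : heis a b c ^ n =
  heis (n%:~R * a) (n%:~R * b) (n%:~R * c + n%:~R * (n%:~R - 1) / 2 * (a * b)).
Proof.
case: n => n.
  by rewrite /exprz heis_exprn.
rewrite /exprz heis_exprn heis_inv NegzE.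
rewrite mulrNz -!pmulrn.
congr heis; rewrite -?natr1; try ring.
by field.
Qed.

Lemma heis_inj a b c a' b' c' : heis a b c = heis a' b' c' ->
  [/\ a = a', b = b' & c = c'].
Proof.
move=> H.
have := congr1 (fun M : 'M[R]_3 => M 0 1) H.
have := congr1 (fun M : 'M[R]_3 => M 1 2) H.
have := congr1 (fun M : 'M[R]_3 => M 0 2) H.
by rewrite !mxE /=.
Qed.

Lemma tt3_conj lam c3 a b c : lam != 0 ->
  tt3 lam c3 *m heis a b c *m invmx (tt3 lam c3) = heis (a / lam) (lam * b) c.
Proof.
move=> hl.
have H : tt3 lam c3 *m mx3 1 0 (-c3) 0 lam^-1 0 0 0 1 = 1%:M.
  by ent; rewrite ?mulfV //; ring.
have [u _] := mulmx1_unit H.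
have -> : invmx (tt3 lam c3) = mx3 1 0 (-c3) 0 lam^-1 0 0 0 1.
  by rewrite -[LHS]mulmx1 -H mulmxA mulVmx // mul1mx.
by ent; field.
Qed.
End H.
Arguments heis {R}.
Lemma det22 (R : comRingType) (M : 'M[R]_2) : \det M = M 0 0 * M 1 1 - M 0 1 * M 1 0.
Proof.
rewrite (expand_det_row _ 0) !big_ord_recr big_ord0 /cofactor !det_mx11 /= !mxE /=.
rewrite add0r expr0 expr1 !mul1r mulN1r mulrN.
by congr (M _ _ * M _ _ - M _ _ * M _ _); apply/val_inj.
Qed.
Lemma tr22 (R : comRingType) (M : 'M[R]_2) : \tr M = M 0 0 + M 1 1.
Proof. rewrite /mxtrace !big_ord_recr big_ord0 /= add0r. by congr (M _ _ + M _ _); apply/val_inj. Qed.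

Lemma tt1E (R : realType) (P : 'M[R]_2) c : tt1 P c = heis (P 0 0) (P 1 0) c.
Proof. by []. Qed.
Lemma tt2E (R : realType) (P : 'M[R]_2) c : tt2 P c = heis (P 0 1) (P 1 1) c.
Proof. by []. Qed.
Lemma tt4E (R : realType) c : tt4 c = @heis R 0 0 c.
Proof. by []. Qed.

Lemma mul22 (R : comRingType) (M N : 'M[R]_2) i j :
  (M *m N) i j = M i 0 * N 0 j + M i 1 * N 1 j.
Proof.
rewrite mxE !big_ord_recr big_ord0 /= add0r.
by congr (M _ _ * N _ _ + M _ _ * N _ _); apply/val_inj.
Qed.

Lemma key (R : realType) (lam a1 b1 a2 b2 : R) (n00 n01 n10 n11 : int)
  (c3 k1 k2 : R) : lam != 0 ->
  a1 * n00%:~R + a2 * n10%:~R = lam^-1 * a1 ->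
  b1 * n00%:~R + b2 * n10%:~R = lam * b1 ->
  a1 * n01%:~R + a2 * n11%:~R = lam^-1 * a2 ->
  b1 * n01%:~R + b2 * n11%:~R = lam * b2 ->
  n00%:~R * n11%:~R - n01%:~R * n10%:~R = 1 :> R ->
  2 < n00%:~R + n11%:~R :> R ->
  exists! c : R * R,
    tt3 lam c3 *m heis a1 b1 c.1 *m invmx (tt3 lam c3)
      = heis a1 b1 c.1 ^ n00 *m heis a2 b2 c.2 ^ n10 *m heis 0 0 k1
    /\
    tt3 lam c3 *m heis a2 b2 c.2 *m invmx (tt3 lam c3)
      = heis a1 b1 c.1 ^ n01 *m heis a2 b2 c.2 ^ n11 *m heis 0 0 k2.
Proof.
move=> hl e00 e10 e01 e11 hd ht.
pose K1 : R := (n00%:~R * (n00%:~R - 1) / 2 * (a1 * b1)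
     + n10%:~R * (n10%:~R - 1) / 2 * (a2 * b2) + n00%:~R * a1 * (n10%:~R * b2) + k1).
pose K2 : R := (n01%:~R * (n01%:~R - 1) / 2 * (a1 * b1)
     + n11%:~R * (n11%:~R - 1) / 2 * (a2 * b2) + n01%:~R * a1 * (n11%:~R * b2) + k2).
have R1 : forall x y, tt3 lam c3 *m heis a1 b1 x *m invmx (tt3 lam c3)
      = heis a1 b1 x ^ n00 *m heis a2 b2 y ^ n10 *m heis 0 0 k1 <->
   x = n00%:~R * x + n10%:~R * y + K1.
  move=> x y; rewrite /K1 /K2 tt3_conj // !heis_exprz !heis_mul.
  split => [/heis_inj [_ _ E] | E]; first by rewrite {1}E; ring.
  congr heis; first by rewrite mulrC -e00; ring.
    by rewrite -e10; ring.
  by rewrite {1}E; ring.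
have R2 : forall x y, tt3 lam c3 *m heis a2 b2 y *m invmx (tt3 lam c3)
      = heis a1 b1 x ^ n01 *m heis a2 b2 y ^ n11 *m heis 0 0 k2 <->
   y = n01%:~R * x + n11%:~R * y + K2.
  move=> x y; rewrite /K1 /K2 tt3_conj // !heis_exprz !heis_mul.
  split => [/heis_inj [_ _ E] | E]; first by rewrite {1}E; ring.
  congr heis; first by rewrite mulrC -e01; ring.
    by rewrite -e11; ring.
  by rewrite {1}E; ring.
clearbody K1 K2.
move: hd ht R1 R2; move: (n00%:~R : R) (n01%:~R : R) (n10%:~R : R) (n11%:~R : R)
  => s00 s01 s10 s11 hd ht R1 R2.
have dnz : (1 - s00) * (1 - s11) - s10 * s01 != 0.
  have dE : (1 - s00) * (1 - s11) - s10 * s01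
     = 1 + 1 - (s00 + s11) + (s00 * s11 - s01 * s10 - 1) by ring.
  rewrite dE hd subrr addr0; apply/eqP => h; lra.
exists (((1 - s11) * K1 + s10 * K2) / ((1 - s00) * (1 - s11) - s10 * s01),
        (s01 * K1 + (1 - s00) * K2) / ((1 - s00) * (1 - s11) - s10 * s01)).
split.
  by split; [apply/R1 | apply/R2]; rewrite /=; field.
move=> [x y] /= [/R1 H1 /R2 H2].
have K1e : K1 = (1 - s00) * x - s10 * y by lra.
have K2e : K2 = (1 - s11) * y - s01 * x by lra.
by rewrite K1e K2e; congr pair; field.
Qed.

Theorem lemma5p2 (R : realType) (S : 'M[int]_2) (lam : R) (P : 'M[R]_2)
  (hdetS : \det S = 1) (htrS : 2 < \tr S)
  (hlam_eig : eigenvalue (map_mx (fun x : int => x%:~R : R) S) lam)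
  (hlam_max : forall mu : R,
      eigenvalue (map_mx (fun x : int => x%:~R : R) S) mu -> mu <= lam)
  (hlam1 : 1 < lam)
  (hdetP : \det P = 1)
  (hconj : P *m map_mx (fun x : int => x%:~R : R) S *m invmx P
           = diag2 lam^-1 lam)
  (q m1 m2 : int) (hq : q != 0) (c3 : R) :
  exists! c : R * R,
    tt3 lam c3 *m tt1 P c.1 *m invmx (tt3 lam c3)
      = tt1 P c.1 ^ (S 0 0) *m tt2 P c.2 ^ (S 1 0) *m tt4 (m1%:~R / q%:~R)
    /\
    tt3 lam c3 *m tt2 P c.2 *m invmx (tt3 lam c3)
      = tt1 P c.1 ^ (S 0 1) *m tt2 P c.2 ^ (S 1 1) *m tt4 (m2%:~R / q%:~R).
Proof.
set A := map_mx (fun x : int => x%:~R : R) S.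
have hl : lam != 0 by rewrite gt_eqF // (lt_trans ltr01 hlam1).
have uP : P \in unitmx by rewrite unitmxE hdetP unitr1.
have PA : P *m A = diag2 lam^-1 lam *m P by rewrite -hconj mulmxKV.
have e00 : P 0 0 * (S 0 0)%:~R + P 0 1 * (S 1 0)%:~R = lam^-1 * P 0 0.
  by have := congr1 (fun M : 'M[R]_2 => M 0 0) PA; rewrite !mul22 !mxE /= mul0r addr0.
have e10 : P 1 0 * (S 0 0)%:~R + P 1 1 * (S 1 0)%:~R = lam * P 1 0.
  by have := congr1 (fun M : 'M[R]_2 => M 1 0) PA; rewrite !mul22 !mxE /= mul0r add0r.
have e01 : P 0 0 * (S 0 1)%:~R + P 0 1 * (S 1 1)%:~R = lam^-1 * P 0 1.
  by have := congr1 (fun M : 'M[R]_2 => M 0 1) PA; rewrite !mul22 !mxE /= mul0r addr0.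
have e11 : P 1 0 * (S 0 1)%:~R + P 1 1 * (S 1 1)%:~R = lam * P 1 1.
  by have := congr1 (fun M : 'M[R]_2 => M 1 1) PA; rewrite !mul22 !mxE /= mul0r add0r.
have hd : (S 0 0)%:~R * (S 1 1)%:~R - (S 0 1)%:~R * (S 1 0)%:~R = 1 :> R.
  by rewrite -!intrM -intrB -det22 hdetS.
have ht : 2 < (S 0 0)%:~R + (S 1 1)%:~R :> R.
  by move: htrS; rewrite tr22 -(ltr_int R) [(S 0 0 + _)%:~R]intrD.
exact (@key R lam (P 0 0) (P 1 0) (P 0 1) (P 1 1) (S 0 0) (S 0 1) (S 1 0) (S 1 1) c3 (m1%:~R/q%:~R) (m2%:~R/q%:~R) hl e00 e10 e01 e11 hd ht).
Qed.
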